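(* Let $k,m,t$ be positive integers with $m+t\le k$ and let $q$ be a prime power. Let $B$ be the bipartite graph whose left (user) vertex set is the set $\mathbb{V}$ of all $t$-dimensional subspaces of $\mathbb{F}_q^k$, whose right (subfile) vertex set is the set $\mathbb{X}$ of all $(m+t)$-dimensional subspaces of $\mathbb{F}_q^k$, and in which $V\in\mathbb{V}$ is adjacent to $X\in\mathbb{X}$ if and only if $V\subseteq X$. Then $B$ is a $(K,F,D)$ bipartite caching graph (for some $D$) with $K=\binom{k}{t}_q$ and $F=\binom{k}{m+t}_q$, and $B$ admits an induced matching cover consisting of $S=\binom{k}{m}_q$ induced matchings each having $g=\binom{k-m}{t}_q$ edges. Consequently (for a library of $N\ge K$ files) it defines a coded caching scheme with $K=\binom{k}{t}_q$ users, subpacketization $F=\binom{k}{m+t}_q$, cache fraction $$\frac{M}{N}=1-\frac{\binom{k-t}{m}_q}{\binom{k}{m+t}_q},$$ rate $R=\binom{k}{m}_q\big/\binom{k}{m+t}_q$, and global caching gain $\gamma=\binom{k-m}{t}_q$.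
   Context: For a prime power $q$ and integers $0\le b\le a$, the Gaussian binomial coefficient is $\binom{a}{b}_q=\frac{(q^a-1)(q^{a-1}-1)\cdots(q^{a-b+1}-1)}{(q^b-1)\cdots(q-1)}$ (with $\binom{a}{0}_q=1$); it equals the number of $b$-dimensional subspaces of an $a$-dimensional vector space over $\mathbb{F}_q$. Coded caching setup: a server holds $N$ files $W_1,\dots,W_N$ and is connected by an error-free broadcast link to $K$ users, each having a cache able to store $M$ files; it is assumed throughout that $N\ge K$. Each file is split into $F$ equal-size subfiles $W_{i,f}$, $f\in\mathcal{F}$, $|\mathcal{F}|=F$ ($F$ is the subpacketization). Caching is done before demands are known and is symmetric: for every user $k$ and index $f$, user $k$ caches either $W_{i,f}$ for all $i\in[N]$ or for no $i$. In the delivery phase every user demands one file and the server broadcasts transmissions, each of the size of one subfile, so that every user can recover its demanded file from its cache and the transmissions, for every demand vector. The rate is $R=(\text{number of transmissions})/F$ and the global caching gain is $\gamma=K(1-M/N)/R$. A $(K,F,D)$ bipartite caching graph is a bipartite graph with $K$ left (user) vertices and $F$ right (subfile) vertices in which every left vertex has degree $D$; it defines the symmetric caching scheme in which user $k$ does not cache the subfiles with index $f$ exactly when $\{k,f\}$ is an edge (so $M/N=1-D/F$). An induced matching of a bipartite graph $B$ is a set $\mathcal{C}\subseteq E(B)$ such that for any two distinct edges $\{k_1,f_1\},\{k_2,f_2\}\in\mathcal{C}$ we have $k_1\ne k_2$, $f_1\ne f_2$ and $\{k_1,f_2\},\{k_2,f_1\}\notin E(B)$. An induced matching cover of $B$ is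 a set of induced matchings that partitions $E(B)$. (Each induced matching $\{\{k_i,f_i\}\}_{i}$ yields the transmission $\sum_i W_{d_{k_i},f_i}$, where $W_{d_k}$ is the file demanded by user $k$.) *)

(* Defs.v *)
From HB Require Import structures.
From mathcomp Require Import all_boot all_order all_algebra.
Set Implicit Arguments. Unset Strict Implicit. Unset Printing Implicit Defensive.
Import GRing.Theory Num.Theory.

(* Gaussian binomial coefficient [a choose b]_q (for b <= a; 0 otherwise).
   The nat division is exact. *)
Definition gauss_binom (q a b : nat) : nat :=
  if b <= a then
    (\prod_(i < b) (q ^ (a - i) - 1)) %/ (\prod_(i < b) (q ^ i.+1 - 1))
  else 0.

(* Subspaces of F^k, represented canonically by their row-space matrix
   <<A>>%MS (a k x k matrix); dimension = rank. *)
Definition subspaces (F : finFieldType) (k d : nat) : {set 'M[F]_k} :=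
  [set A : 'M[F]_k | (<<A>>%MS == A) && (\rank A == d)].

Section Bipartite.
Variables (T U : finType) (L : {set T}) (R : {set U}) (e : T -> U -> bool).

Definition bedges : {set T * U} := [set p in setX L R | e p.1 p.2].

Definition nbhd (v : T) : {set U} := [set x in R | e v x].

Definition caching_graph (K Fn D : nat) : Prop :=
  #|L| = K /\ #|R| = Fn /\ forall v, v \in L -> #|nbhd v| = D.

Definition induced_matching (C : {set T * U}) : bool :=
  (C \subset bedges) &&
  [forall p1 in C, forall p2 in C, (p1 != p2) ==>
     [&& p1.1 != p2.1, p1.2 != p2.2, ~~ e p1.1 p2.2 & ~~ e p2.1 p1.2]].

Definition induced_matching_cover (P : {set {set T * U}}) : bool :=
  partition P bedges && [forall C in P, induced_matching C].
End Bipartite.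

Local Open Scope ring_scope.
Definition cache_fraction (D Fn : nat) : rat := 1 - D%:R / Fn%:R.
Definition caching_rate (S Fn : nat) : rat := S%:R / Fn%:R.
Definition caching_gain (K : nat) (MN R : rat) : rat := K%:R * (1 - MN) / R.

(* Main.v *)
Require Import Defs.
From HB Require Import structures.
From mathcomp Require Import all_boot all_order all_algebra.
From mathcomp Require Import ring.
Import GRing.Theory Num.Theory.
Set Implicit Arguments. Unset Strict Implicit.


Lemma card_rows (F : finFieldType) (k p : nat) (B : 'M[F]_(p, k)) :
  #|[set v : 'rV[F]_k | (v <= B)%MS]| = (#|F| ^ \rank B)%N.
Proof.
have -> : [set v : 'rV[F]_k | (v <= B)%MS] =
          [set (u *m row_base B)%R | u in 'rV[F]_(\rank B)].
  apply/setP => v; rewrite inE; apply/idP/imsetP.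
    by rewrite -(eq_row_base B) => /submxP[u ->]; exists u.
  by case=> u _ ->; rewrite -(eq_row_base B) submxMl.
rewrite card_imset; last exact: row_free_inj (row_base_free B).
by rewrite card_mx mul1n.
Qed.

Lemma card_rows_out (F : finFieldType) (k p1 p2 : nat) (X : 'M[F]_(p1, k)) (C : 'M[F]_(p2,k)) :
  (C <= X)%MS ->
  #|[set v : 'rV[F]_k | (v <= X)%MS && ~~ (v <= C)%MS]| = (#|F| ^ \rank X - #|F| ^ \rank C)%N.
Proof.
move=> sCX.
have -> : [set v : 'rV[F]_k | (v <= X)%MS && ~~ (v <= C)%MS] =
   [set v : 'rV[F]_k | (v <= X)%MS] :\: [set v : 'rV[F]_k | (v <= C)%MS].
  by apply/setP => v; rewrite !inE andbC.
rewrite cardsD -!card_rows (setIidPr _) //.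
by apply/subsetP => v; rewrite !inE => h; apply: submx_trans h sCX.
Qed.

Lemma rank_add_row (F : fieldType) (k p1 : nat) (C : 'M[F]_(p1, k)) (v : 'rV[F]_k) (r : nat) :
  \rank C <= r ->
  (\rank (C + v)%MS == r.+1) = (\rank C == r) && ~~ (v <= C)%MS.
Proof.
move=> hC.
have [h] := mxrank_leqif_sup (addsmxSl C v).
rewrite addsmx_sub submx_refl /= => hq.
have hup : \rank (C + v)%MS <= (\rank C).+1.
  apply: leq_trans (mxrank_adds_leqif C v) _.
  by rewrite -(addn1 (\rank C)) leq_add // rank_leq_row.
case hv: (v <= C)%MS => /=.
  have : (\rank C == \rank (C + v)%MS) by rewrite hq.
  move/eqP=> <-; rewrite andbF; apply/negbTE; rewrite neq_ltn ltnS hC //.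
rewrite andbT.
have hlt : \rank C < \rank (C + v)%MS by rewrite ltn_neqAle hq hv h.
apply/eqP/eqP => [E|E].
  by apply/eqP; rewrite eqn_leq hC -ltnS -E.
by apply/eqP; rewrite -E eqn_leq hup hlt.
Qed.


Lemma col_rank_cond (F : fieldType) (k p1 s : nat) (U : 'M[F]_(p1,k)) (v : 'rV[F]_k) (A : 'M[F]_(s,k)) :
  (\rank (U + col_mx v A)%MS == \rank U + s.+1) =
  (\rank (U + A)%MS == \rank U + s) && ~~ (v <= U + A)%MS.
Proof.
have -> : \rank (U + col_mx v A)%MS = \rank ((U + A) + v)%MS.
  have /andP[hv hA] : (v <= col_mx v A)%MS && (A <= col_mx v A)%MS.
    by rewrite -col_mx_sub submx_refl.
  apply/eqP; rewrite eqn_leq; apply/andP; split; apply: mxrankS; rewrite !addsmx_sub ?col_mx_sub.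
    rewrite addsmxSr (submx_trans (addsmxSl U A) (addsmxSl _ v)).
    by rewrite (submx_trans (addsmxSr U A) (addsmxSl _ v)).
  by rewrite addsmxSl (submx_trans hA (addsmxSr U _)) (submx_trans hv (addsmxSr U _)).
rewrite addnS rank_add_row //.
apply: leq_trans (mxrank_adds_leqif U A) _.
by rewrite leq_add2l rank_leq_row.
Qed.

Lemma count_ext (F : finFieldType) (k p1 p2 s : nat) (U : 'M[F]_(p1,k)) (X : 'M[F]_(p2,k)) :
  (U <= X)%MS ->
  #|[set M : 'M[F]_(s,k) | (M <= X)%MS && (\rank (U + M)%MS == \rank U + s)]| =
  \prod_(i < s) (#|F| ^ \rank X - #|F| ^ (\rank U + i)).
Proof.
move=> sUX; elim: s => [|s IH].
  rewrite big_ord0 (_ : [set M | _] = setT); first by rewrite cardsT card_mx.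
  apply/setP => M; rewrite !inE (flatmx0 M) sub0mx /= addn0.
  by apply/eqP/eqmx_rank; rewrite addsmx_sub submx_refl sub0mx addsmxSl.
rewrite big_ord_recr /= -IH -sum_nat_const -[LHS]sum1_card.
rewrite (partition_big (@dsubmx F 1 s k) (mem [set M : 'M[F]_(s,k) | (M <= X)%MS && (\rank (U + M)%MS == \rank U + s)])) /=; last first.
  move=> M; rewrite !inE -(vsubmxK M) (@col_mx_sub _ 1 s k) col_rank_cond col_mxKd.
  by case/andP=> /andP[_ ->] /andP[-> _].
apply: eq_bigr => A; rewrite inE => /andP[AX rA].
rewrite (reindex (col_mx^~ A)) /=; last first.
  exists (@usubmx F 1 s k) => [v _ | M]; first by rewrite col_mxKu.
  by case/andP=> _ /eqP <-; rewrite vsubmxK.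
rewrite -(eqP rA) -card_rows_out; last by rewrite addsmx_sub sUX.
rewrite -sum1_card; apply: eq_bigl => v.
rewrite !inE col_mxKd eqxx andbT (@col_mx_sub _ 1 s k) col_rank_cond AX rA /=.
by rewrite andbT.
Qed.


Definition SW (F : finFieldType) (k : nat) (U X : 'M[F]_k) (s : nat) : {set 'M[F]_k} :=
  [set W : 'M[F]_k | [&& <<W>>%MS == W, \rank W == s, (W <= X)%MS &
                         \rank (U + W)%MS == \rank U + s]].

Lemma rank_good (F : fieldType) (k p1 s : nat) (U : 'M[F]_(p1,k)) (M : 'M[F]_(s,k)) :
  \rank (U + M)%MS = \rank U + s -> \rank M = s.
Proof.
move=> h; apply/eqP; rewrite eqn_leq rank_leq_row /=.
rewrite -(leq_add2l (\rank U)) -h; exact: mxrank_adds_leqif.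
Qed.

Lemma rank_adds_gen (F : fieldType) (k p1 s : nat) (U : 'M[F]_(p1,k)) (M : 'M[F]_(s,k)) :
  \rank (U + <<M>>)%MS = \rank (U + M)%MS.
Proof. by rewrite (adds_eqmx (eqmx_refl U) (genmxE M)). Qed.

Lemma count_SW (F : finFieldType) (k s : nat) (U X : 'M[F]_k) :
  (U <= X)%MS ->
  #|SW U X s| * \prod_(i < s) (#|F| ^ s - #|F| ^ i) =
  \prod_(i < s) (#|F| ^ \rank X - #|F| ^ (\rank U + i)).
Proof.
move=> sUX; rewrite -(count_ext s sUX) -[RHS]sum1_card.
rewrite (partition_big (fun M : 'M[F]_(s,k) => <<M>>%MS) (mem (SW U X s))) /=; last first.
  move=> M; rewrite !inE => /andP[MX /eqP rM].
  rewrite genmx_id eqxx mxrank_gen (rank_good rM) eqxx genmxE MX /=.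
  by rewrite rank_adds_gen rM.
rewrite -sum_nat_const; apply: eq_bigr => W; rewrite inE => /and4P[/eqP cW /eqP rW WX /eqP rUW].
have -> : (\prod_(i < s) (#|F| ^ s - #|F| ^ i)) =
          \prod_(i < s) (#|F| ^ \rank W - #|F| ^ (\rank (0%R : 'M[F]_k) + i)).
  by apply: eq_bigr => i _; rewrite mxrank0 rW.
rewrite -(count_ext s (sub0mx k W)) -sum1_card; apply: eq_bigl => M.
rewrite !inE (adds0mx k M) mxrank0 add0n.
apply/idP/idP; last first.
  case/andP=> /andP[MX /eqP rM] /eqP <-.
  by rewrite genmxE submx_refl (rank_good rM) /=.
case/andP=> MW /eqP rM.
have eMW : (M == W)%MS.
  by rewrite -(mxrank_leqif_eq MW) rM rW.
rewrite (submx_trans MW WX) /=.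
have -> : \rank (U + M)%MS = \rank (U + W)%MS.
  by rewrite (adds_eqmx (eqmx_refl U) (eqmxP eMW)).
rewrite rUW eqxx /=.
by rewrite -cW; apply/eqP/genmxP.
Qed.


Lemma pow_minus (q a b : nat) : b <= a -> q ^ a - q ^ b = q ^ b * (q ^ (a - b) - 1).
Proof. by move=> h; rewrite mulnBr muln1 -expnD subnKC. Qed.

Lemma prod_fact (q n c s : nat) : c + s <= n ->
  \prod_(i < s) (q ^ n - q ^ (c + i)) =
  \prod_(i < s) q ^ (c + i) * \prod_(i < s) (q ^ (n - c - i) - 1).
Proof.
move=> h; rewrite -big_split /=; apply: eq_bigr => i _.
rewrite pow_minus ?subnDA //.
by apply: leq_trans h; rewrite leq_add2l ltnW.
Qed.

Lemma prod_rev (q s : nat) :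
  \prod_(i < s) (q ^ (s - i) - 1) = \prod_(i < s) (q ^ i.+1 - 1).
Proof.
rewrite (reindex_inj rev_ord_inj) /=; apply: eq_bigr => i _.
by rewrite subKn.
Qed.

Lemma prod_shift (q u s : nat) :
  \prod_(i < s) (q ^ (u + s) - q ^ (u + i)) = q ^ (u * s) * \prod_(i < s) (q ^ s - q ^ i).
Proof.
rewrite (eq_bigr (fun i : 'I_s => q ^ u * (q ^ s - q ^ i))); last first.
  by move=> i _; rewrite mulnBr -!expnD.
by rewrite big_split /= prod_nat_const card_ord expnM.
Qed.

Lemma den_gt0 (q s : nat) : 1 < q -> 0 < \prod_(i < s) (q ^ i.+1 - 1).
Proof.
move=> hq; apply: prodn_gt0 => i; rewrite subn_gt0.
by rewrite -{1}(expn0 q) ltn_exp2l.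
Qed.

Lemma gauss_eq (q a b x : nat) : b <= a -> 1 < q ->
  x * \prod_(i < b) (q ^ i.+1 - 1) = \prod_(i < b) (q ^ (a - i) - 1) ->
  gauss_binom q a b = x.
Proof.
move=> hba hq h; rewrite /gauss_binom hba -h mulnK //; exact: den_gt0.
Qed.

Lemma gauss_from_count (q n c b x : nat) : c + b <= n -> 1 < q ->
  x * \prod_(i < b) (q ^ (c + b) - q ^ (c + i)) = \prod_(i < b) (q ^ n - q ^ (c + i)) ->
  gauss_binom q (n - c) b = x.
Proof.
move=> hn hq; rewrite !prod_fact // ?leqnn // mulnCA => /eqP.
rewrite eqn_pmul2l; last by apply: prodn_gt0 => i; rewrite expn_gt0 (ltnW hq).
move/eqP => h; apply: gauss_eq => //; first by rewrite leq_subRL // (leq_trans _ hn) // leq_addr.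
rewrite -prod_rev -h; congr (_ * _); apply: eq_bigr => i _.
by rewrite addKn.
Qed.


Lemma q_gt1 (F : finFieldType) : 1 < #|F|.
Proof. exact: card_finNzRing_gt1. Qed.

Lemma subspaces_SW (F : finFieldType) (k d : nat) :
  subspaces F k d = SW 0%R 1%:M d.
Proof.
apply/setP => W; rewrite !inE submx1 (adds0mx k W) mxrank0 add0n /=.
by case: (_ == _); case: (_ == _).
Qed.

Lemma card_subspaces (F : finFieldType) (k d : nat) : d <= k ->
  #|subspaces F k d| = gauss_binom #|F| k d.
Proof.
move=> hd; rewrite -(subn0 k); symmetry; apply: (@gauss_from_count _ k 0) => //.
  exact: q_gt1.
have := count_SW d (sub0mx k (1%:M : 'M[F]_k)).
rewrite mxrank1 mxrank0 -subspaces_SW => <-.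
rewrite subn0 add0n; congr (_ * _); apply: eq_bigr => i _; by rewrite add0n.
Qed.

Definition sup_set (F : finFieldType) (k : nat) (V : 'M[F]_k) (d : nat) :=
  [set X in subspaces F k d | (V <= X)%MS].

Lemma card_sup (F : finFieldType) (k a b : nat) (V : 'M[F]_k) :
  \rank V = a -> a + b <= k ->
  #|sup_set V (a + b)| = gauss_binom #|F| (k - a) b.
Proof.
move=> rV hk; symmetry; apply: (@gauss_from_count _ k a) => //; first exact: q_gt1.
have := count_SW b (submx1 V); rewrite mxrank1 rV => <-.
rewrite -[#|SW _ _ _|]sum1_card.
rewrite (partition_big (fun W => <<(V + W)%MS>>%MS) (mem (sup_set V (a + b)))) /=; last first.
  move=> W; rewrite !inE => /and4P[_ _ _ /eqP h].
  by rewrite genmx_id eqxx mxrank_gen h rV eqxx genmxE addsmxSl.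
rewrite big_distrl /= -sum_nat_const; apply: eq_bigr => X.
rewrite !inE => /andP[/andP[/eqP cX /eqP rX] VX].
have := count_SW b VX; rewrite rX rV => <-; congr (_ * _).
rewrite -sum1_card; apply: eq_bigl => W; rewrite !inE submx1 /=.
rewrite rV; apply/idP/idP; last first.
  case/andP=> /and3P[-> -> ->] /eqP <-.
  by rewrite genmxE addsmxSr.
case/and4P=> -> -> WX /eqP h; rewrite h eqxx /=.
have e : (V + W == X)%MS.
  by rewrite -(mxrank_leqif_eq (_ : (V + W <= X)%MS)) ?h ?rX ?rV // addsmx_sub VX WX.
by rewrite -cX; apply/eqP/genmxP.
Qed.


Definition nb (T U : finType) (r : T -> U -> bool) (R0 : {set U}) (B : {set T}) : {set U} :=
  [set y in R0 | [exists x in B, r x y]].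

Lemma nb_sub (T U : finType) (r : T -> U -> bool) (R0 : {set U}) (B : {set T}) :
  nb r R0 B \subset R0.
Proof. by apply/subsetP => y; rewrite inE => /andP[]. Qed.

Lemma hall (T U : finType) (r : T -> U -> bool) (y0 : U) (n : nat) :
  forall (A : {set T}) (R0 : {set U}), #|A| <= n ->
  (forall B : {set T}, B \subset A -> #|B| <= #|nb r R0 B|) ->
  exists f : T -> U, {in A &, injective f} /\
                     (forall x, x \in A -> (f x \in R0) && r x (f x)).
Proof.
elim: n => [|n IH] A R0 hA hH.
  exists (fun _ => y0); split; move=> x; move: hA; rewrite leqn0 cards_eq0 => /eqP ->;
  by rewrite inE.
case: (set_0Vmem A) => [-> | [a aA]].
  by exists (fun _ => y0); split => x; rewrite inE.
case: (boolP [exists B : {set T}, [&& B \proper A, B != set0 & #|nb r R0 B| <= #|B|]]).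
  case/existsP => B /and3P[pBA nB0 tB].
  have sBA := proper_sub pBA.
  have eB : #|nb r R0 B| = #|B| by apply/eqP; rewrite eqn_leq tB hH.
  have [f1 [inj1 p1]] : exists f : T -> U, {in B &, injective f} /\
                     (forall x, x \in B -> (f x \in R0) && r x (f x)).
    apply: IH; last by move=> C sCB; apply: hH; apply: subset_trans sCB sBA.
    by rewrite -ltnS; apply: leq_trans hA; apply: proper_card.
  pose R1 := R0 :\: nb r R0 B.
  have [f2 [inj2 p2]] : exists f : T -> U, {in A :\: B &, injective f} /\
                     (forall x, x \in A :\: B -> (f x \in R1) && r x (f x)).
    apply: IH.
      rewrite -ltnS; apply: leq_trans hA; rewrite cardsD (setIidPr sBA) ltn_subrL.
      by rewrite card_gt0 nB0 card_gt0; apply/set0Pn; exists a.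
    move=> C sC.
    have hCB : [disjoint C & B].
      by rewrite -setI_eq0; apply/eqP/setP => x; rewrite !inE;
         apply/negbTE; apply/andP => [[xC xB]]; move: (subsetP sC x xC); rewrite inE xB.
    have := hH (C :|: B); rewrite subUset sBA andbT.
    have -> : C \subset A by apply: subset_trans sC (subsetDl _ _).
    move=> /(_ isT); rewrite cardsU (disjoint_setI0 hCB) cards0 subn0.
    move=> h; rewrite -(leq_add2r #|B|); apply: leq_trans h _.
    rewrite -eB; apply: leq_trans (leq_card_setU _ _).
    apply: subset_leq_card; apply/subsetP => y hy.
    have [yR /existsP[x /andP[]]] : (y \in R0) /\ [exists x in C :|: B, r x y].
      by move: hy; rewrite inE => /andP[].
    rewrite inE => /orP[] xC rxy; last first.
      by rewrite inE; apply/orP; right; rewrite inE yR; apply/existsP; exists x; rewrite xC.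
    case: (boolP (y \in nb r R0 B)) => hyB; first by rewrite inE hyB orbT.
    rewrite inE; apply/orP; left; rewrite inE.
    rewrite /R1 inE hyB yR /=; apply/existsP; exists x; rewrite xC.
    done.
  have f1nb : forall x, x \in B -> f1 x \in nb r R0 B.
    move=> x xB; have /andP[h1 h2] := p1 x xB.
    by rewrite inE h1; apply/existsP; exists x; rewrite xB.
  have f2nb : forall x, x \in A :\: B -> (f2 x \notin nb r R0 B) && (f2 x \in R0) && r x (f2 x).
    by move=> x xAB; have /andP[] := p2 x xAB; rewrite inE => /andP[-> ->] ->.
  exists (fun x => if x \in B then f1 x else f2 x); split.
    move=> x1 x2 h1 h2 /=.
    case: (boolP (x1 \in B)) => b1; case: (boolP (x2 \in B)) => b2.
    - exact: inj1.
    - have xAB : x2 \in A :\: B by rewrite inE b2.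
      move=> E; have := f2nb _ xAB; rewrite -E f1nb //.
    - have xAB : x1 \in A :\: B by rewrite inE b1.
      move=> E; have := f2nb _ xAB; rewrite E f1nb //.
    - by apply: inj2; rewrite inE ?b1 ?b2.
  move=> x xA; case: (boolP (x \in B)) => b; first exact: p1.
  have xAB : x \in A :\: B by rewrite inE b.
  by have /andP[/andP[_ ->] ->] := f2nb _ xAB.
move=> nT.
have hnT : forall B : {set T}, B \proper A -> B != set0 -> #|B| < #|nb r R0 B|.
  move=> B pBA nB0; rewrite ltnNge; apply/negP => h; move/negP: nT; apply.
  by apply/existsP; exists B; rewrite pBA nB0 h.
have : 0 < #|nb r R0 [set a]|.
  by apply: leq_trans (hH _ _); rewrite ?cards1 // sub1set.
rewrite card_gt0 => /set0Pn[y]; rewrite inE => /andP[yR /existsP[x /andP[]]].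
rewrite inE => /eqP -> ray {x}.
pose R1 := R0 :\ y.
have [f2 [inj2 p2]] : exists f : T -> U, {in A :\ a &, injective f} /\
                     (forall x, x \in A :\ a -> (f x \in R1) && r x (f x)).
  apply: IH.
    by rewrite -ltnS; apply: leq_trans hA; rewrite (cardsD1 a A) aA.
  move=> C sC; case: (eqVneq C set0) => [-> | nC0]; first by rewrite cards0.
  have pCA : C \proper A.
    apply/properP; split; first by apply: subset_trans sC (subsetDl _ _).
    by exists a => //; apply/negP => /(subsetP sC); rewrite !inE eqxx.
  have := hnT C pCA nC0 => h.
  rewrite -ltnS; apply: leq_trans h _.
  have : #|nb r R0 C| <= #|y |: nb r R1 C|.
    apply: subset_leq_card; apply/subsetP => z; rewrite inE => /andP[zR ex].
    case: (eqVneq z y) => [-> | nzy]; first by rewrite setU11.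
    by rewrite setU1r // inE ex andbT /R1 !inE nzy.
  move/leq_trans; apply; rewrite cardsU1.
  by rewrite addnC -addn1 leq_add2l leq_b1.
exists (fun x => if x == a then y else f2 x); split.
  move=> x1 x2 h1 h2 /=.
  case: (eqVneq x1 a) => [-> | n1]; case: (eqVneq x2 a) => [-> | n2] //.
  - have x2A : x2 \in A :\ a by rewrite !inE n2.
    by move=> E; have := p2 _ x2A; rewrite -E /R1 !inE eqxx.
  - have x1A : x1 \in A :\ a by rewrite !inE n1.
    by move=> E; have := p2 _ x1A; rewrite E /R1 !inE eqxx.
  - by apply: inj2; rewrite !inE ?n1 ?n2.
move=> x xA; case: (eqVneq x a) => [-> | nxa]; first by rewrite yR.
have xA' : x \in A :\ a by rewrite !inE nxa.
by have /andP[] := p2 _ xA'; rewrite /R1 !inE => /andP[_ ->] ->.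
Qed.

Lemma card_sep (U : finType) (S : {set U}) (P : pred U) :
  #|[set y in S | P y]| = \sum_(y in S) (P y : nat).
Proof.
rewrite -sum1_card big_mkcond [RHS]big_mkcond /=; apply: eq_bigr => i _.
by rewrite inE; case: (i \in S); case: (P i).
Qed.

Lemma double_count (T U : finType) (r : T -> U -> bool) (A : {set T}) (R0 : {set U}) :
  \sum_(x in A) #|[set y in R0 | r x y]| = \sum_(y in R0) #|[set x in A | r x y]|.
Proof.
under eq_bigr do rewrite card_sep.
rewrite exchange_big /=; apply: eq_bigr => y _.
by rewrite card_sep.
Qed.

Lemma regular_hall (T U : finType) (r : T -> U -> bool) (y0 : U) (A : {set T}) (R0 : {set U}) (d : nat) :
  0 < d ->
  (forall x, x \in A -> #|[set y in R0 | r x y]| = d) ->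
  (forall y, y \in R0 -> #|[set x in A | r x y]| = d) ->
  #|A| = #|R0| /\ exists f : T -> U, {in A &, injective f} /\
                     (forall x, x \in A -> (f x \in R0) && r x (f x)).
Proof.
move=> d0 hL hR; split.
  apply/eqP; rewrite -(eqn_pmul2r d0) -!sum_nat_const; apply/eqP.
  rewrite -(eq_bigr _ hL) -(eq_bigr _ hR); exact: double_count.
apply: (@hall _ _ r y0 #|A|) => // B sBA.
rewrite -(leq_pmul2r d0) -!sum_nat_const.
have -> : \sum_(i in B) d = \sum_(x in B) #|[set y in R0 | r x y]|.
  by apply: eq_bigr => x xB; rewrite hL // (subsetP sBA).
rewrite double_count.
rewrite [X in X <= _](bigID (mem (nb r R0 B))) /=.
rewrite [X in _ + X]big1 ?addn0; last first.
  move=> y /andP[yR ynb]; apply/eqP; rewrite cards_eq0; apply/eqP/setP => x.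
  rewrite !inE; apply/negbTE/negP => /andP[xB rxy].
  have : y \in nb r R0 B by rewrite inE yR /=; apply/existsP; exists x; rewrite xB.
  by move/negP: ynb.
rewrite (eq_bigl (mem (nb r R0 B))); last first.
  move=> y /=; apply: andb_idl => h; exact: (subsetP (nb_sub r R0 B) y h).
apply: leq_sum => y yN; rewrite -(hR y); last exact: (subsetP (nb_sub r R0 B) y yN).
apply: subset_leq_card; apply/subsetP => x; rewrite !inE => /andP[xB ->].
by rewrite (subsetP sBA).
Qed.


Lemma card_pairs (T U : finType) (A : {set T}) (B : {set U}) (P : T -> U -> bool) :
  #|[set p in setX A B | P p.1 p.2]| = \sum_(a in A) #|[set b in B | P a b]|.
Proof.
rewrite card_sep; under [RHS]eq_bigr do rewrite card_sep.
rewrite pair_big /=; apply: eq_bigl => p; by rewrite inE.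
Qed.

Lemma deg_SW (F : finFieldType) (k u s : nat) (U X : 'M[F]_k) :
  (U <= X)%MS -> \rank U = u -> \rank X = u + s -> #|SW U X s| = #|F| ^ (u * s).
Proof.
move=> UX rU rX; have := count_SW s UX; rewrite rU rX prod_shift mulnC => /eqP.
rewrite [X in _ == X]mulnC eqn_pmul2l; first by move/eqP.
apply: prodn_gt0 => i; rewrite subn_gt0 ltn_exp2l //; exact: q_gt1.
Qed.

Lemma gauss_gt0 (F : finFieldType) (n d : nat) : d <= n -> 0 < gauss_binom #|F| n d.
Proof.
move=> h; rewrite -card_subspaces // card_gt0; apply/set0Pn.
exists (<<(pid_mx d : 'M[F]_n)>>%MS); by rewrite inE genmx_id eqxx mxrank_gen rank_pid_mx // eqxx.

Qed.

Lemma key_eq (F : finFieldType) (k d : nat) (Y V X1 X2 : 'M[F]_k) :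
  X1 \in subspaces F k d -> X2 \in subspaces F k d ->
  (Y <= X1)%MS -> (Y <= X2)%MS -> (V <= X1)%MS -> (V <= X2)%MS ->
  \rank (Y + V)%MS = d -> X1 = X2.
Proof.
rewrite !inE => /andP[/eqP c1 /eqP r1] /andP[/eqP c2 /eqP r2] Y1 Y2 V1 V2 r.
have e : forall X : 'M[F]_k, (Y <= X)%MS -> (V <= X)%MS -> \rank X = d -> <<(Y + V)%MS>>%MS = <<X>>%MS.
  move=> X YX VX rX; apply/genmxP.
  by rewrite -(mxrank_leqif_eq (_ : (Y + V <= X)%MS)) ?r ?rX // addsmx_sub YX VX.
by rewrite -c1 -c2 -(e X1) // (e X2).
Qed.


Unset Implicit Arguments. Set Strict Implicit.
Local Open Scope ring_scope.

Theorem theorem2 (F : finFieldType) (k m t : nat)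
    (hm : (0 < m)%N) (ht : (0 < t)%N) (hmtk : (m + t <= k)%N) :
  let q := #|F| in
  let L := subspaces F k t in
  let R := subspaces F k (m + t) in
  let e := fun V X : 'M[F]_k => (V <= X)%MS in
  let K := gauss_binom q k t in
  let Fn := gauss_binom q k (m + t) in
  let S := gauss_binom q k m in
  let g := gauss_binom q (k - m) t in
  (exists D : nat, caching_graph L R e K Fn D) /\
  (exists P : {set {set 'M[F]_k * 'M[F]_k}},
      [/\ induced_matching_cover L R e P, #|P| = S &
          forall C, C \in P -> #|C| = g]) /\
  (forall D : nat, caching_graph L R e K Fn D ->
     [/\ cache_fraction D Fn =
           1 - (gauss_binom q (k - t) m)%:R / Fn%:R,
         caching_rate S Fn = S%:R / Fn%:R &
         caching_gain K (cache_fraction D Fn) (caching_rate S Fn) = g%:R]).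
Proof.
Local Open Scope nat_scope.
move=> q L R e K Fn S g.
have q1 : (1 < q)%N := q_gt1 F.
have hmk : (m <= k)%N by apply: leq_trans hmtk; rewrite leq_addr.
have htk : (t <= k)%N by apply: leq_trans hmtk; rewrite leq_addl.
pose Gm := subspaces F k m.
have hnb : forall V, V \in L -> #|nbhd R e V| = gauss_binom q (k - t) m.
  move=> V; rewrite inE => /andP[_ /eqP rV].
  have -> : nbhd R e V = sup_set V (t + m) by apply/setP => X; rewrite !inE addnC.
  by rewrite card_sup // addnC.
have cL : #|L| = K by rewrite card_subspaces.
have cR : #|R| = Fn by rewrite card_subspaces.
have cG : #|Gm| = S by rewrite card_subspaces.
pose left := [set p in setX Gm R | (p.1 <= p.2)%MS].
pose right := bedges L R e.
pose rel := fun p p' : 'M[F]_k * 'M[F]_k => (p'.2 == p.2) && (\rank (p.1 + p'.1)%MS == m + t).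
have memS : forall (d : nat) (A : 'M[F]_k), (A \in subspaces F k d) = (<<A>>%MS == A) && (\rank A == d).
  by move=> d A; rewrite inE.
have degL : forall p, p \in left -> #|[set p' in right | rel p p']| = q ^ (m * t).
  case=> Y X; rewrite !inE /= => /andP[/and3P[/andP[cY /eqP rY] cX /eqP rX] YX].
  rewrite -(deg_SW YX rY rX).
  have -> : [set p' in right | rel (Y, X) p'] = [set (V, X) | V in SW Y X t].
    apply/setP => [[V X']]; rewrite !inE /rel /=; apply/idP/imsetP.
      case/andP=> /andP[/and3P[/andP[cV rV] cX' rX'] VX'] /andP[/eqP eX rYV].
      subst X'; exists V => //; rewrite inE cV rV rY rYV andbT; exact: VX'.
    case=> V' hV [-> ->]; move: hV; rewrite inE => /and4P[cV rV VX rYV].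
    by rewrite cV rV cX rX /= -rY rYV /e VX !eqxx.
  by rewrite card_imset // => V1 V2 [].
have degR : forall p', p' \in right -> #|[set p in left | rel p p']| = q ^ (m * t).
  case=> V X; rewrite !inE /= => /andP[/and3P[/andP[cV /eqP rV] cX /eqP rX] VX].
  have rX' : \rank X = t + m by rewrite addnC.
  rewrite mulnC -(deg_SW VX rV rX').
  have -> : [set p in left | rel p (V, X)] = [set (Y, X) | Y in SW V X m].
    apply/setP => [[Y X']]; rewrite !inE /rel /=; apply/idP/imsetP.
      case/andP=> /andP[/and3P[/andP[cY rY] cX' rX'2] YX'] /andP[/eqP eX rYV].
      subst X'; exists Y => //; rewrite inE cY rY rV YX' addsmxC addnC; exact: rYV.
    case=> Y' hY [-> ->]; move: hY; rewrite inE => /and4P[cY rY YX rVY].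
    by rewrite cY rY cX rX YX /= addsmxC -(addnC t) -rV rVY !eqxx.
  by rewrite card_imset // => V1 V2 [].
have dpos : 0 < q ^ (m * t) by rewrite expn_gt0 (ltnW q1).
have [eqLR [f [finj fP]]] := @regular_hall _ _ rel (0%R, 0%R) _ _ _ dpos degL degR.
have fimg : f @: left = right.
  apply/eqP; rewrite eqEcard; apply/andP; split.
    by apply/subsetP => p /imsetP[p0 hp0 ->]; case/andP: (fP p0 hp0).
  by rewrite card_in_imset // eqLR.
pose C := fun Y => f @: [set p in left | p.1 == Y].
have memC : forall Y p, p \in C Y -> exists2 p0, p0 \in left & p0.1 = Y /\ p = f p0.
  move=> Y p /imsetP[p0]; rewrite inE => /andP[h /eqP e1] ->; by exists p0.
have Cinj : forall Y1 Y2 p, p \in C Y1 -> p \in C Y2 -> Y1 = Y2.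
  move=> Y1 Y2 p /memC[p1 h1 [e1 ->]] /memC[p2 h2 [e2 E]].
  by rewrite -e1 -e2 (finj _ _ h1 h2 E).
have gpos : 0 < g by apply: gauss_gt0; rewrite leq_subRL // addnC.
have cC : forall Y, Y \in Gm -> #|C Y| = g.
  move=> Y YG; rewrite card_in_imset; last first.
    by move=> x y hx hy; apply: finj; [move: hx | move: hy]; rewrite inE => /andP[].
  have rY : \rank Y = m by move: YG; rewrite inE => /andP[_ /eqP].
  rewrite /g /q -(card_sup rY hmtk).
  have -> : [set p in left | p.1 == Y] = [set (Y, X) | X in sup_set Y (m + t)].
    apply/setP => [[Y' X]]; rewrite !inE /=; apply/idP/imsetP.
      case/andP=> /andP[/and3P[_ cX rX] Y'X] /eqP eY; subst Y'.
      by exists X => //; rewrite !inE cX rX Y'X.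
    case=> X' hX [-> ->]; move: hX; rewrite !inE => /andP[/andP[cX rX] YX].
    by rewrite cX rX YX eqxx !andbT; move: YG; rewrite inE.
  by rewrite card_imset // => X1 X2 [].
have rightP : forall p, p \in right -> [/\ p.1 \in L, p.2 \in R & (p.1 <= p.2)%MS].
  case=> V X; rewrite /right /bedges in_set in_setX /= => /andP[/andP[h1 h2] h3].
  by split.
have leftP : forall p, p \in left -> [/\ p.1 \in Gm, p.2 \in R & (p.1 <= p.2)%MS].
  case=> V X; rewrite /left in_set in_setX /= => /andP[/andP[h1 h2] h3].
  by split.
have ext : forall Y p, p \in C Y ->
    [/\ p.1 \in L, p.2 \in R, (p.1 <= p.2)%MS, (Y <= p.2)%MS &
        (\rank (Y + p.1)%MS = m + t /\ p = f (Y, p.2))].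
  move=> Y p /memC[[Y0 X0] h0 [/= eY ->]]; subst Y0.
  case/andP: (fP _ h0) => /rightP[h1 h2 h3].
  rewrite /rel /= => /andP[/eqP e2 /eqP rk].
  have [_ _ YX0] := leftP _ h0.
  by split => //; rewrite e2.
have cntL : #|left| = S * g.
  rewrite /left (card_pairs Gm R (fun a b => (a <= b)%MS)) -cG -sum_nat_const.
  apply: eq_bigr => Y YG.
  have rY : \rank Y = m by move: YG; rewrite inE => /andP[_ /eqP].
  by rewrite /g /q -(card_sup rY hmtk).
have cntR : #|right| = K * gauss_binom q (k - t) m.
  rewrite /right /bedges (card_pairs L R e) -cL -sum_nat_const.
  apply: eq_bigr => V VL; exact: hnb.
split.
  exists (gauss_binom q (k - t) m); split; first exact: cL.
  split; first exact: cR.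
  exact: hnb.
split.
  exists [set C Y | Y in Gm]; split.
  - rewrite /induced_matching_cover; apply/andP; split.
      rewrite /partition; apply/and3P; split.
      + apply/eqP/setP => p; apply/bigcupP/idP.
          case=> B /imsetP[Y YG ->] hp; have [h1 h2 h3 _ _] := ext Y p hp.
          case: p hp h1 h2 h3 => V X /= hp h1 h2 h3.
          by rewrite /bedges in_set in_setX h1 h2.
        move=> hp; have : p \in f @: left by rewrite fimg.
        case/imsetP=> p0 h0 ->; exists (C p0.1).
          by apply/imsetP; exists p0.1 => //; case: (leftP _ h0).
        by apply/imsetP; exists p0 => //; rewrite in_set h0 eqxx.
      + apply/trivIsetP => A B /imsetP[Y1 _ ->] /imsetP[Y2 _ ->] neq.
        rewrite -setI_eq0; apply/eqP/setP => p; rewrite in_setI in_set0.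
        apply/negbTE/negP => /andP[h1 h2]; move/negP: neq; apply.
        by rewrite (Cinj _ _ _ h1 h2).
      + apply/imsetP => [[Y YG E]]; have := cC Y YG; rewrite -E cards0 => g0.
        by rewrite -g0 in gpos.
    apply/forallP => C0; apply/implyP => /imsetP[Y YG ->].
    rewrite /induced_matching; apply/andP; split.
      apply/subsetP => p hp; have [h1 h2 h3 _ _] := ext Y p hp.
      case: p hp h1 h2 h3 => V X /= hp h1 h2 h3.
      by rewrite /bedges in_set in_setX h1 h2.
    apply/forallP => p1; apply/implyP => hp1; apply/forallP => p2; apply/implyP => hp2.
    apply/implyP => neq.
    have [a1 b1 c1 d1 [r1 f1]] := ext Y p1 hp1.
    have [a2 b2 c2 d2 [r2 f2]] := ext Y p2 hp2.
    have X12 : p1.2 != p2.2.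
      by apply/negP => /eqP E; move/negP: neq; apply; rewrite f1 f2 E.
    have n12 : ~~ (p1.1 <= p2.2)%MS.
      apply/negP => h; move/negP: X12; apply; apply/eqP.
      exact: (key_eq b1 b2 d1 d2 c1 h r1).
    have n21 : ~~ (p2.1 <= p1.2)%MS.
      apply/negP => h; move/negP: X12; apply; apply/eqP; symmetry.
      exact: (key_eq b2 b1 d2 d1 c2 h r2).
    have V12 : p1.1 != p2.1.
      by apply/negP => /eqP E; move/negP: n21; apply; rewrite -E.
    by rewrite /e V12 X12 n12 n21.
  - rewrite card_in_imset ?cG // => Y1 Y2 h1 h2 E.
    have : 0 < #|C Y1| by rewrite cC.
    rewrite card_gt0 => /set0Pn[p hp].
    by apply: (Cinj _ _ p hp); rewrite -E.
  - by move=> C0 /imsetP[Y YG ->]; exact: cC.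
move=> D [_ [_ hD]].
have V0L : <<(pid_mx t : 'M[F]_k)>>%MS \in L.
  by rewrite /L inE genmx_id eqxx mxrank_gen rank_pid_mx // eqxx.
have eD : D = gauss_binom q (k - t) m by rewrite -(hD _ V0L) hnb.
have KD : K * D = S * g by rewrite eD -cntR -cntL eqLR.
have Fn0 : Fn != 0 by rewrite -lt0n; apply: gauss_gt0.
have S0 : S != 0 by rewrite -lt0n; apply: gauss_gt0.
split; first by rewrite eD.
  by [].
have e1 : (K%:R * D%:R = S%:R * g%:R :> rat)%R by rewrite -!natrM KD.
have f0' : (Fn%:R != 0 :> rat)%R by rewrite pnatr_eq0.
have s0' : (S%:R != 0 :> rat)%R by rewrite pnatr_eq0.
rewrite /caching_gain /cache_fraction /caching_rate.
rewrite (_ : (K%:R * (1 - (1 - D%:R / Fn%:R)) / (S%:R / Fn%:R) = (K%:R * D%:R) / S%:R :> rat)%R).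
  by rewrite e1 mulrC mulrA mulVf // mul1r.
by field; rewrite f0' s0'.
Qed.
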